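(* Let $L$ be an IL-algebra and $F$ a distributive filter of $L$. Then the lattice $L/F$ (with $[x]\cup[y]=[x\cup y]$, $[x]\cap[y]=[x\cap y]$) is distributive.
   Context: An IL-algebra is a structure $(L,\cup,\cap,\bot,\to,\ast,1)$ such that $(L,\cup,\cap,\bot)$ is a lattice with least element $\bot$, $(L,\ast,1)$ is a commutative monoid with unit $1$, and for all $x,y,z\in L$: $x\ast y\leq z$ iff $x\leq y\to z$. A filter of $L$ is a non-empty $F\subseteq L$ with $1\in F$, such that $x,y\in F$ implies $x\ast y\in F$ and $x\cap y\in F$, and $x\in F$, $x\leq y$ implies $y\in F$. A filter $F$ is distributive if $((x\cup y)\cap(x\cup z))\to(x\cup(y\cap z))\in F$ for all $x,y,z\in L$. For a filter $F$, $x\,\rho_F\,y$ iff $x\to y\in F$ and $y\to x\in F$; $[x]$ is the $\rho_F$-class of $x$ and $L/F=\{[x]:x\in L\}$, with the operations on classes well defined. *)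

(* Defs.v *)
(** The lattice order is x ≤ y iff
    x ∩ y = x. *)
Record ILAlgebra := {
  carrier :> Type;
  join : carrier -> carrier -> carrier;
  meet : carrier -> carrier -> carrier;
  bot : carrier;
  imp : carrier -> carrier -> carrier;
  mul : carrier -> carrier -> carrier;
  one : carrier;
  join_comm : forall x y, join x y = join y x;
  meet_comm : forall x y, meet x y = meet y x;
  join_assoc : forall x y z, join x (join y z) = join (join x y) z;
  meet_assoc : forall x y z, meet x (meet y z) = meet (meet x y) z;
  join_meet_absorb : forall x y, join x (meet x y) = x;
  meet_join_absorb : forall x y, meet x (join x y) = x;
  bot_least : forall x, meet bot x = bot;
  mul_comm : forall x y, mul x y = mul y x;
  mul_assoc : forall x y z, mul x (mul y z) = mul (mul x y) z;
  mul_one : forall x, mul x one = x;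
  residuation : forall x y z, meet (mul x y) z = mul x y <-> meet x (imp y z) = x
}.

Section IL.
Variable L : ILAlgebra.

Definition le (x y : L) : Prop := meet L x y = x.

Definition is_filter (F : L -> Prop) : Prop :=
  (exists x, F x) /\
  F (one L) /\
  (forall x y, F x -> F y -> F (mul L x y)) /\
  (forall x y, F x -> F y -> F (meet L x y)) /\
  (forall x y, F x -> le x y -> F y).

Definition distributive_filter (F : L -> Prop) : Prop :=
  is_filter F /\
  forall x y z : L,
    F (imp L (meet L (join L x y) (join L x z)) (join L x (meet L y z))).

Definition rho (F : L -> Prop) (x y : L) : Prop :=
  F (imp L x y) /\ F (imp L y x).

Definition cls (F : L -> Prop) (x : L) : L -> Prop := fun y => rho F x y.

Definition quotient_distributive (F : L -> Prop) : Prop :=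
  forall x y z : L,
    cls F (meet L x (join L y z)) = cls F (join L (meet L x y) (meet L x z)) /\
    cls F (join L x (meet L y z)) = cls F (meet L (join L x y) (join L x z)).
End IL.

(* Main.v *)
Require Import Defs.
From Stdlib Require Import FunctionalExtensionality PropExtensionality.

Section P.
Variable L : ILAlgebra.
Notation "x ⊓ y" := (meet L x y) (at level 40, left associativity).
Notation "x ⊔ y" := (join L x y) (at level 50, left associativity).
Notation lе := (le L).

Lemma meet_idem (x : L) : x ⊓ x = x.
Proof. rewrite <- (join_meet_absorb L x x) at 2. apply meet_join_absorb. Qed.

Lemma le_join (x y : L) : le L x y <-> x ⊔ y = y.
Proof.
  unfold le; split; intro H.
  - rewrite <- H. rewrite join_comm, meet_comm. apply join_meet_absorb.
  - rewrite <- H. apply meet_join_absorb.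
Qed.

Lemma le_refl (x : L) : le L x x.
Proof. apply meet_idem. Qed.

Lemma le_trans (x y z : L) : le L x y -> le L y z -> le L x z.
Proof. unfold le; intros H1 H2. rewrite <- H1, <- meet_assoc, H2. reflexivity. Qed.

Lemma meet_glb (x y z : L) : le L z x -> le L z y -> le L z (x ⊓ y).
Proof. unfold le; intros H1 H2. rewrite meet_assoc, H1, H2. reflexivity. Qed.

Lemma meet_lb1 (x y : L) : le L (x ⊓ y) x.
Proof. unfold le. rewrite (meet_comm L _ x), meet_assoc, meet_idem. reflexivity. Qed.

Lemma meet_lb2 (x y : L) : le L (x ⊓ y) y.
Proof. rewrite meet_comm. apply meet_lb1. Qed.

Lemma join_ub1 (x y : L) : le L x (x ⊔ y).
Proof. apply meet_join_absorb. Qed.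

Lemma join_ub2 (x y : L) : le L y (x ⊔ y).
Proof. rewrite join_comm. apply join_ub1. Qed.

Lemma join_lub (x y z : L) : le L x z -> le L y z -> le L (x ⊔ y) z.
Proof. rewrite !le_join; intros H1 H2. rewrite <- join_assoc, H2, H1. reflexivity. Qed.

Lemma resid (x y z : L) : le L (mul L x y) z <-> le L x (imp L y z).
Proof. apply residuation. Qed.
Lemma resid1 (x y z : L) : le L (mul L x y) z -> le L x (imp L y z).
Proof. apply resid. Qed.
Lemma resid2 (x y z : L) : le L x (imp L y z) -> le L (mul L x y) z.
Proof. apply resid. Qed.

Lemma mul_mono_l (a b c : L) : le L a b -> le L (mul L a c) (mul L b c).
Proof. intro H. apply resid2. apply le_trans with b; auto. apply resid1, le_refl. Qed.

Lemma mul_mono_r (a b c : L) : le L a b -> le L (mul L c a) (mul L c b).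
Proof. intro H. rewrite !(mul_comm L c). now apply mul_mono_l. Qed.

Lemma mp (a b : L) : le L (mul L (imp L a b) a) b.
Proof. apply resid2, le_refl. Qed.

Lemma one_imp (a b : L) : le L a b -> le L (one L) (imp L a b).
Proof. intro H. apply resid1. rewrite mul_comm, mul_one. exact H. Qed.

Variable F : L -> Prop.
Hypothesis HF : is_filter L F.

Lemma F_up x y : F x -> le L x y -> F y.
Proof. destruct HF as (_&_&_&_&H). apply H. Qed.
Lemma F_one : F (one L).
Proof. destruct HF as (_&H&_). exact H. Qed.
Lemma F_mul x y : F x -> F y -> F (mul L x y).
Proof. destruct HF as (_&_&H&_). apply H. Qed.
Lemma F_meet x y : F x -> F y -> F (x ⊓ y).
Proof. destruct HF as (_&_&_&H&_). apply H. Qed.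

Lemma F_le a b : le L a b -> F (imp L a b).
Proof. intro H. apply F_up with (one L). apply F_one. now apply one_imp. Qed.

Lemma F_trans a b c : F (imp L a b) -> F (imp L b c) -> F (imp L a c).
Proof.
  intros H1 H2. apply F_up with (mul L (imp L a b) (imp L b c)).
  now apply F_mul. apply resid1.
  rewrite (mul_comm L (imp L a b)), <- mul_assoc.
  apply le_trans with (mul L (imp L b c) b). apply mul_mono_r, mp. apply mp.
Qed.

Lemma F_meetc a b c : F (imp L a b) -> F (imp L (c ⊓ a) (c ⊓ b)).
Proof.
  intro H. apply F_up with (imp L a b ⊓ one L). apply F_meet; auto using F_one.
  apply resid1. apply meet_glb.
  - apply le_trans with (mul L (one L) (c ⊓ a)). apply mul_mono_l, meet_lb2.
    rewrite mul_comm, mul_one. apply meet_lb1.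
  - apply le_trans with (mul L (imp L a b) (c ⊓ a)). apply mul_mono_l, meet_lb1.
    apply le_trans with (mul L (imp L a b) a). apply mul_mono_r, meet_lb2. apply mp.
Qed.

Lemma rho_cls a b : rho L F a b -> cls L F a = cls L F b.
Proof.
  intros [H1 H2]. apply functional_extensionality; intro y.
  apply propositional_extensionality. unfold cls, rho; split; intros [K1 K2]; split;
  eauto using F_trans.
Qed.

End P.

Theorem mainTheorem8 (L : ILAlgebra) (F : L -> Prop) :
  distributive_filter L F -> quotient_distributive L F.
Proof.
  intros [HF HD] x y z.
  assert (D2 : forall x y z : L, rho L F (join L x (meet L y z)) (meet L (join L x y) (join L x z))).
  { intros a b c. split; auto. apply F_le; auto. apply meet_glb.
    - apply join_lub. apply join_ub1. apply le_trans with b. apply meet_lb1. apply join_ub2.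
    - apply join_lub. apply join_ub1. apply le_trans with c. apply meet_lb2. apply join_ub2. }
  split; [| apply rho_cls; auto].
  apply rho_cls; auto.
  split.
  -
    destruct (D2 (meet L x y) x z) as [_ K1].
    eapply F_trans; [auto| |exact K1].
    destruct (D2 z x y) as [K2 _].
    destruct (D2 z x y) as [_ K3].
    pose proof (F_meetc L F HF _ _ x K3) as K4.
    eapply F_trans; [auto| |eapply F_trans; [auto|exact K4|]].
    + apply F_le; auto. apply meet_glb. apply meet_lb1.
      apply meet_glb. apply le_trans with x. apply meet_lb1. apply join_ub2.
      apply le_trans with (join L y z). apply meet_lb2.
      apply join_lub. apply join_ub2. apply join_ub1.
    + apply F_le; auto. apply meet_glb.
      apply le_trans with x. apply meet_lb1. apply join_ub2.
      apply le_trans with (join L z (meet L x y)). apply meet_lb2.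
      apply join_lub. apply join_ub2. apply join_ub1.
  - apply F_le; auto. apply join_lub; apply meet_glb; try apply meet_lb1.
    apply le_trans with y. apply meet_lb2. apply join_ub1.
    apply le_trans with z. apply meet_lb2. apply join_ub2.
Qed.
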